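(* Let $\gamma>0$, $p\geq1$, and $B\geq A$ be real numbers. Let $(a,b)\subseteq\mathbb{R}$ be an interval, and let $v:\mathcal{D}\cap(a,b)\to[A,B]$ be a function. Assume there exist two integers $\alpha,\beta$ with $a<\alpha<\beta<b$ such that $v(\alpha)=A$ and $v(\beta)=B$. Then for every $\delta\in[1/2,1]$ and every real number $\lambda\geq2^{1+\gamma/p}(B-A)$, $$DF_{\gamma,p,\lambda}(\delta,v,(a,b))\geq\frac{1}{2^{\gamma+1}-1}\cdot\frac{1}{\lambda^p\delta^{p+\gamma}}\cdot\frac{(B-A)^p}{(\beta-\alpha)^{p-1}}.$$
   Context: Let $\psi_{\gamma,p,\lambda}(\delta,\Delta)=1$ if $\Delta>\lambda\delta^{1+\gamma/p}$ and $0$ otherwise, for $(\delta,\Delta)\in[0,\infty)^2$. Let $\mathcal{D}=\{i/2^k:i\in\mathbb{Z},k\in\mathbb{N}\}$ be the dyadic numbers. For an interval $(a,b)$ and integer $k\geq0$, let $\mathcal{D}_k(a,b)=\{i\in\mathbb{Z}:[i/2^k,(i+1)/2^k]\subseteq(a,b)\}$. For $\delta>0$ and $v:\mathcal{D}\cap(a,b)\to\mathbb{R}$, the dyadic functional is $$DF_{\gamma,p,\lambda}(\delta,v,(a,b))=\sum_{k=0}^\infty\frac{1}{2^{k(\gamma+1)}}\sum_{i\in\mathcal{D}_k(a,b)}\psi_{\gamma,p,\lambda}\!\left(\frac{\delta}{2^k},\left|v\!\left(\tfrac{i+1}{2^k}\right)-v\!\left(\tfrac{i}{2^k}\right)\right|\right).$$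 *)

(* Defs.v *)
From HB Require Import structures.
From mathcomp Require Import all_boot all_order all_algebra.
From mathcomp Require Import all_classical all_reals all_analysis.
Set Implicit Arguments. Unset Strict Implicit. Unset Printing Implicit Defensive.
Import Order.TTheory GRing.Theory Num.Theory.
Local Open Scope classical_set_scope.
Local Open Scope ring_scope.

Definition psi {R : realType} (gamma p lambda : R) (delta Delta : R) : R :=
  if lambda * delta `^ (1 + gamma / p) < Delta then 1 else 0.

Definition dyadic {R : realType} (x : R) : Prop :=
  exists (i : int) (k : nat), x = i%:~R / 2 ^+ k.

Definition Dk {R : realType} (k : nat) (a b : \bar R) : set int :=
  [set i : int | (a < ((i%:~R : R) / 2 ^+ k)%:E)%E /\
                 ((((i + 1)%:~R : R) / 2 ^+ k)%:E < b)%E].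

Definition DF {R : realType} (gamma p lambda delta : R) (v : R -> R) (a b : \bar R)
  : \bar R :=
  (\sum_(0 <= k <oo)
     (((2 : R) `^ (k%:R * (gamma + 1)))^-1)%:E *
     \esum_(i in Dk k a b)
        (psi gamma p lambda (delta / 2 ^+ k)
           `|v ((i + 1)%:~R / 2 ^+ k) - v (i%:~R / 2 ^+ k)|)%:E)%E.

(* Main.v *)
Require Import Defs.
From HB Require Import structures.
From mathcomp Require Import all_boot all_order all_algebra.
From mathcomp Require Import all_classical all_reals all_analysis.
From mathcomp Require Import ring lra zify.
Import Order.TTheory GRing.Theory Num.Theory.
Local Open Scope classical_set_scope.
Local Open Scope ring_scope.

Section S.
Variable R : realType.

Lemma powR_conv (p t x y : R) : 1 <= p -> 0 <= t -> t <= 1 -> 0 <= x -> 0 <= y ->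
  (t * x + (1 - t) * y) `^ p <= t * x `^ p + (1 - t) * y `^ p.
Proof.
move=> p1 t0 t1 x0 y0.
have := @convex_powR R p p1 (Itv01 t0 t1) x y.
rewrite !inE /= !in_itv /= !andbT => /(_ x0 y0).
by rewrite !convRE.
Qed.

Lemma power_mean (p : R) (f : nat -> R) n : 1 <= p -> (forall m, 0 <= f m) ->
  n.+1%:R * ((\sum_(m < n.+1) f m) / n.+1%:R) `^ p <= \sum_(m < n.+1) (f m) `^ p.
Proof.
move=> p1 f0; elim: n => [|n IH].
  by rewrite !big_ord1 mul1r divr1.
rewrite big_ord_recr [X in _ <= X]big_ord_recr /=.
set S := \sum_(i < n.+1) f i.
have S0 : 0 <= S by rewrite sumr_ge0.
pose t : R := n.+1%:R / n.+2%:R.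
have n2 : 0 < n.+2%:R :> R by rewrite ltr0n.
have t0 : 0 <= t by rewrite divr_ge0.
have t1 : t <= 1 by rewrite ler_pdivrMr // mul1r ler_nat.
have E : (S + f n.+1) / n.+2%:R = t * (S / n.+1%:R) + (1 - t) * f n.+1.
  rewrite /t; field; rewrite ?pnatr_eq0 //.
  by apply/andP; split; apply: lt0r_neq0; apply: ltr_wpDr; rewrite ?ler0n ?ltr0n.
rewrite E.
have H := powR_conv p t (S / n.+1%:R) (f n.+1) p1 t0 t1 (divr_ge0 S0 (ler0n _ _)) (f0 n.+1).
apply: (le_trans (ler_wpM2l (ltW n2) H)).
have e1 : n.+2%:R * t = n.+1%:R by rewrite /t mulrCA divff ?pnatr_eq0 // mulr1.
have e2 : n.+2%:R * (1 - t) = 1.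
  by rewrite mulrBr mulr1 e1 -natrB // subSn // subnn.
have -> : n.+2%:R * (t * (S / n.+1%:R) `^ p + (1 - t) * f n.+1 `^ p) =
   n.+2%:R * t * (S / n.+1%:R) `^ p + n.+2%:R * (1 - t) * f n.+1 `^ p by ring.
rewrite e1 e2 mul1r lerD2r; exact: IH.
Qed.

Lemma powRV (x r : R) : 0 <= x -> (x^-1) `^ r = (x `^ r)^-1.
Proof. by move=> x0; rewrite -powR_inv1 // powRAC powR_inv1 // powR_ge0. Qed.

Lemma two_pow_gt1 (x : R) : 0 < x -> 1 < (2:R) `^ x.
Proof.
move=> x0; rewrite /powR (negbTE (lt0r_neq0 (ltr0n _ 2))) expR_gt1.
by rewrite mulr_gt0 // ln_gt0 // ltr1n.
Qed.

Lemma sum_blocks (F : nat -> R) L P :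
  \sum_(t < L * P) F t = \sum_(m < L) \sum_(r < P) F (m * P + r)%N.
Proof.
elim: L => [|L IH]; first by rewrite mul0n !big_ord0.
rewrite mulSnr big_split_ord IH big_ord_recr /=; congr (_ + _).
Qed.

Lemma esum_lb (D : set int) (f : int -> R) (i0 : int) n :
  (forall i, 0 <= f i) -> (forall t, (t < n)%N -> D (i0 + t%:Z)) ->
  ((\sum_(t < n) f (i0 + t%:Z))%:E <= \esum_(i in D) (f i)%:E)%E.
Proof.
move=> f0 hD; apply: esum_ge; exists ((fun t : nat => i0 + t%:Z) @` `I_n).
  split; first exact/finite_image/finite_II.
  by move=> _ [t /= tn <-]; exact: hD.
rewrite fsbig_image; last by move=> x y _ _ /= /addrI/(congr1 absz).
by rewrite -fsbig_ord sumEFin.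
Qed.

Lemma intr2X j : (((2 ^ j)%N%:Z)%:~R : R) = 2 ^+ j.
Proof. by rewrite -pmulrn natrX. Qed.

Lemma Dk_mem (a b : \bar R) (alpha : int) Ln j t :
  (a < ((alpha%:~R : R))%:E)%E -> ((((alpha + Ln%:Z)%:~R : R))%:E < b)%E ->
  (t < Ln * 2 ^ j)%N -> Dk j a b (alpha * (2 ^ j)%N%:Z + t%:Z).
Proof.
move=> ha hb ht; have e0 : (0:R) < 2 ^+ j by rewrite exprn_gt0.
split.
  apply: lt_le_trans ha _; rewrite lee_fin ler_pdivlMr // intrD intrM intr2X.
  by rewrite lerDl -pmulrn ler0n.
apply: le_lt_trans _ hb; rewrite lee_fin ler_pdivrMr // !intrD intrM intr2X.
rewrite mulrDl -addrA lerD2l -!pmulrn -natrD -natrX -natrM ler_nat addn1.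
exact: ht.
Qed.

Lemma bern (h : R) N : 0 <= h -> 1 + N%:R * h <= (1 + h) ^+ N.
Proof.
move=> h0; elim: N => [|N IH]; first by rewrite mul0r addr0 expr0.
rewrite exprS; apply: le_trans (ler_wpM2l (addr_ge0 ler01 h0) IH).
have -> : (1 + h) * (1 + N%:R * h) = 1 + N.+1%:R * h + N%:R * (h * h).
  by rewrite -natr1; ring.
by rewrite lerDl mulr_ge0 // mulr_ge0.
Qed.

Section Main.
Variables (gamma p lambda delta : R) (v : R -> R).
Hypotheses (g0 : 0 < gamma) (p1 : 1 <= p) (l0 : 0 < lambda) (dl0 : 0 < delta).

Let p0 : 0 < p. Proof. exact: lt_le_trans ltr01 p1. Qed.

Definition qq := 1 + gamma / p.
Definition ss (k : nat) := lambda * (delta / 2 ^+ k) `^ qq.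
Definition dd (k : nat) (i : int) : R :=
  `|v ((i + 1)%:~R / 2 ^+ k) - v (i%:~R / 2 ^+ k)|.
Definition bb k i := psi gamma p lambda (delta / 2 ^+ k) (dd k i).
Definition ww (k : nat) := ((2 : R) `^ (k%:R * (gamma + 1)))^-1.
Definition GG := (2:R) `^ (gamma + 1).
Definition cc := (GG - 1)^-1.
Definition rho := ((2:R) `^ gamma)^-1.
Definition Psi k i := if ss k < dd k i then GG else (dd k i / ss k) `^ p.
Definition TT k i n := \sum_(j < n.+1) ww (k + j) *
   \sum_(r < 2 ^ j) bb (k + j) (i * (2 ^ j)%:Z + r%:Z).

Lemma bbE k i : bb k i = if ss k < dd k i then 1 else 0.
Proof. by []. Qed.

Lemma ss_gt0 k : 0 < ss k.
Proof. by rewrite mulr_gt0 // powR_gt0 // divr_gt0 // exprn_gt0. Qed.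

Lemma GG_gt1 : 1 < GG.
Proof. by apply: two_pow_gt1; rewrite addr_gt0. Qed.

Lemma GGE : GG = 2 `^ gamma * 2.
Proof. by rewrite /GG powRD ?powRr1 // implybE pnatr_eq0 orbT. Qed.

Lemma cc_gt0 : 0 < cc.
Proof. by rewrite invr_gt0 subr_gt0 GG_gt1. Qed.

Lemma ccE : cc * (GG - 1) = 1.
Proof. by rewrite mulVf // subr_eq0 gt_eqF // GG_gt1. Qed.

Lemma ww_gt0 k : 0 < ww k.
Proof. by rewrite invr_gt0 powR_gt0. Qed.

Lemma ww0 : ww 0 = 1.
Proof. by rewrite /ww mul0r powRr0 invr1. Qed.

Lemma wwS k : ww k.+1 = ww k / GG.
Proof.
rewrite /ww /GG -invfM -powRD; last by rewrite implybE pnatr_eq0 orbT.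
rewrite -[k.+1]addn1 natrD.
by rewrite mulrDl mul1r.
Qed.

Lemma qqE : (2:R) `^ qq = 2 * 2 `^ (gamma / p).
Proof. by rewrite /qq powRD ?powRr1 // implybE pnatr_eq0 orbT. Qed.

Lemma ssS k : ss k.+1 = ss k / 2 `^ qq.
Proof.
rewrite /ss -mulrA; congr (_ * _).
have h1 : 0 <= delta / 2 ^+ k by rewrite divr_ge0 ?exprn_ge0 // ltW.
have -> : delta / 2 ^+ k.+1 = (delta / 2 ^+ k) * 2^-1.
  rewrite exprS invfM; field; exact: lt0r_neq0 (exprn_gt0 _ (ltr0n _ 2)).
by rewrite powRM ?powRV // invr_ge0 ler0n.
Qed.


Lemma pt2 (j : int) k : ((2 * j)%:~R : R) / 2 ^+ k.+1 = j%:~R / 2 ^+ k.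
Proof.
rewrite intrM exprS; field; exact: lt0r_neq0 (exprn_gt0 _ (ltr0n _ 2)).
Qed.

Lemma dd_split k i : dd k i <= dd k.+1 (2 * i) + dd k.+1 (2 * i + 1).
Proof.
rewrite /dd (_ : 2 * i + 1 + 1 = 2 * (i + 1)); last by ring.
rewrite !pt2 [X in _ <= X]addrC; exact: ler_distD.
Qed.

Lemma gp_gt1 : 1 < (2:R) `^ (gamma / p).
Proof. by apply: two_pow_gt1; rewrite divr_gt0. Qed.

Lemma big_child k i : ss k < dd k i ->
  ss k.+1 < dd k.+1 (2 * i) \/ ss k.+1 < dd k.+1 (2 * i + 1).
Proof.
move=> h; case: (ltP (ss k.+1) (dd k.+1 (2 * i))) => h1; first by left.
case: (ltP (ss k.+1) (dd k.+1 (2 * i + 1))) => h2; first by right.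
exfalso; have := dd_split k i.
have : dd k.+1 (2 * i) + dd k.+1 (2 * i + 1) <= ss k.+1 * 2 by rewrite mulr2n mulrDr mulr1 lerD.
rewrite ssS qqE => e1 e2.
have e3 : ss k / (2 * 2 `^ (gamma / p)) * 2 < ss k.
  have -> : ss k / (2 * 2 `^ (gamma / p)) * 2 = ss k / 2 `^ (gamma / p).
    field.
    exact: lt0r_neq0 (lt_trans ltr01 gp_gt1).
  rewrite ltr_pdivrMr ?(lt_trans ltr01 gp_gt1) // ltr_pMr ?ss_gt0 //; exact: gp_gt1.
have := le_lt_trans (le_trans e2 e1) e3.
by rewrite ltNge (ltW h).
Qed.

Lemma Psi_ge0 k i : 0 <= Psi k i.
Proof. rewrite /Psi; case: ifP => _; [exact: ltW (lt_trans ltr01 GG_gt1) | exact: powR_ge0]. Qed.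

Lemma Psi_big k i : ss k < dd k i -> Psi k i = GG.
Proof. by rewrite /Psi => ->. Qed.

Lemma Psi_small k i : ~~ (ss k < dd k i) -> Psi k i = (dd k i / ss k) `^ p.
Proof. by rewrite /Psi => /negbTE ->. Qed.


Lemma powR_le1 (x : R) : 0 <= x -> x <= 1 -> x `^ p <= 1.
Proof.
move=> x0 x1; have := @ge0_ler_powR R p (ltW p0) x 1.
by rewrite powR1 /= !nnegrE ler01 => /(_ x0 isT x1).
Qed.

Lemma key k i : cc * Psi k i <=
  bb k i + cc / GG * (Psi k.+1 (2 * i) + Psi k.+1 (2 * i + 1)).
Proof.
have G1 := GG_gt1; have c0 := cc_gt0; have cE := ccE.
have P1 := Psi_ge0 k.+1 (2 * i); have P2 := Psi_ge0 k.+1 (2 * i + 1).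
have G0 : GG != 0 by rewrite gt_eqF // (lt_trans ltr01).
have eG y : cc / GG * (GG + y) = cc + cc / GG * y by field.
have eG' y : cc / GG * (y + GG) = cc + cc / GG * y by field.
have cG0 : 0 <= cc / GG by rewrite divr_ge0 // ltW // (lt_trans ltr01).
rewrite bbE; case: (ltP (ss k) (dd k i)) => h.
  rewrite Psi_big //.
  have hy : forall y, 0 <= y -> 0 <= cc / GG * y by move=> y y0; rewrite mulr_ge0.
  have e1 : cc * GG = 1 + cc by rewrite -cE; ring.
  case: (big_child k i h) => hc; rewrite (Psi_big _ _ hc) ?eG ?eG' e1 lerD2l.
    by rewrite lerDl hy.
  by rewrite lerDl hy.
have hs : ~~ (ss k < dd k i) by rewrite -leNgt.
rewrite (Psi_small _ _ hs) add0r.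
have s0 := ss_gt0 k; have s1 := ss_gt0 k.+1.
set x := dd k i / ss k.
have x0 : 0 <= x by rewrite divr_ge0 ?/dd ?normr_ge0 // ltW.
have x1 : x <= 1 by rewrite ler_pdivrMr // mul1r.
have xp1 : x `^ p <= 1 by exact: powR_le1.
case: (ltP (ss k.+1) (dd k.+1 (2 * i))) => h1.
  rewrite (Psi_big _ _ h1) eG; apply: le_trans (ler_wpM2l (ltW c0) xp1) _.
  by rewrite mulr1 lerDl mulr_ge0.
case: (ltP (ss k.+1) (dd k.+1 (2 * i + 1))) => h2.
  rewrite (Psi_big _ _ h2) eG'; apply: le_trans (ler_wpM2l (ltW c0) xp1) _.
  by rewrite mulr1 lerDl mulr_ge0.
rewrite !Psi_small -?leNgt //.
set x1' := dd k.+1 (2 * i) / ss k.+1.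
set x2' := dd k.+1 (2 * i + 1) / ss k.+1.
have x10 : 0 <= x1' by rewrite divr_ge0 ?/dd ?normr_ge0 // ltW.
have x20 : 0 <= x2' by rewrite divr_ge0 ?/dd ?normr_ge0 // ltW.
have hsum : x * (2 * 2 `^ (gamma / p)) <= x1' + x2'.
  rewrite /x1' /x2' -mulrDl /x ssS qqE.
  have -> : dd k i / ss k * (2 * 2 `^ (gamma / p)) = dd k i / (ss k / (2 * 2 `^ (gamma / p))).
    by field; rewrite ?(gt_eqF s0) ?(gt_eqF (lt_trans ltr01 gp_gt1)) ?pnatr_eq0.
  by rewrite ler_pM2r ?dd_split // invr_gt0 divr_gt0 // mulr_gt0 // (lt_trans ltr01 gp_gt1).
have t0 : 0 <= (2:R)^-1 by rewrite invr_ge0 ler0n.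
have t1 : (2:R)^-1 <= 1 by rewrite invf_le1 ?ler1n ?ltr0n.
have hc := powR_conv p (2^-1) x1' x2' p1 t0 t1 x10 x20.
have et : 1 - (2:R)^-1 = 2^-1 by field.
rewrite et in hc.
have gp0 : 0 <= (2:R) `^ (gamma / p) by exact: powR_ge0.
have hxa : 0 <= x * 2 `^ (gamma / p) by rewrite mulr_ge0.
have hxb : 0 <= 2^-1 * x1' + 2^-1 * x2' by apply: addr_ge0; apply: mulr_ge0.
have hm : (x * 2 `^ (gamma / p)) `^ p <= (2^-1 * x1' + 2^-1 * x2') `^ p.
  apply: (ge0_ler_powR (ltW p0)); rewrite ?nnegrE //.
  move: hsum; set g := 2 `^ (gamma / p) => hsum.
  rewrite -mulrDr (_ : x * g = 2^-1 * (x * (2 * g))); last by field.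
  by rewrite ler_wpM2l.
rewrite powRM // -powRrM in hm.
rewrite divfK ?(gt_eqF p0) // in hm.
have := le_trans hm hc; rewrite GGE => H.
have g0' : 0 < (2:R) `^ gamma by exact: powR_gt0.
rewrite -mulrA ler_pM2l // mulrC ler_pdivlMr ?mulr_gt0 //.
rewrite mulrA; apply: le_trans (ler_wpM2r (ler0n _ 2) H) _.
have -> : (2^-1 * x1' `^ p + 2^-1 * x2' `^ p) * 2 = x1' `^ p + x2' `^ p by field.
by [].
Qed.



Lemma TT0 k i : TT k i 0 = ww k * bb k i.
Proof.
rewrite /TT big_ord1 addn0 expn0 big_ord1 /=.
by rewrite mulr1 addr0.
Qed.

Lemma TTS k i n :
  TT k i n.+1 = ww k * bb k i + TT k.+1 (2 * i) n + TT k.+1 (2 * i + 1) n.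
Proof.
rewrite {1}/TT big_ord_recl -addrA; congr (_ + _).
  by rewrite /TT big_ord1 /= addn0 expn0 mulr1 addr0.
rewrite /TT -big_split; apply: eq_bigr => j _ /=.
rewrite /bump leq0n add1n addnS -addSn -mulrDr; congr (_ * _).
rewrite expnS mul2n -addnn big_split_ord /=; congr (_ + _); apply: eq_bigr => r _ /=.
  by congr (bb _ _); rewrite PoszD; ring.
by congr (bb _ _); rewrite !PoszD; ring.
Qed.


Lemma TT_bound n : forall k i, cc * ww k * (Psi k i - rho ^+ n) <= TT k i n.
Proof.
have G0 : GG != 0 by rewrite gt_eqF // (lt_trans ltr01 GG_gt1).
elim: n => [|n IH] k i.
  rewrite TT0 expr0 bbE /Psi; case: ifPn => h.
    by rewrite -mulrA mulrCA ccE !mulr1.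
  have s0 := ss_gt0 k.
  have x0 : 0 <= dd k i / ss k by rewrite divr_ge0 ?/dd ?normr_ge0 // ltW.
  have x1 : dd k i / ss k <= 1 by rewrite ler_pdivrMr // mul1r leNgt.
  have := powR_le1 _ x0 x1; rewrite mulr0 -subr_le0 => hx.
  by rewrite mulr_ge0_le0 // mulr_ge0 // ltW ?cc_gt0 ?ww_gt0.
rewrite TTS.
have W0 := ww_gt0 k.
apply: le_trans (lerD (lerD (lexx _) (IH k.+1 (2 * i))) (IH k.+1 (2 * i + 1))).
have K := ler_wpM2l (ltW W0) (key k i).
rewrite wwS.
have er : rho ^+ n.+1 = rho ^+ n * 2 / GG.
  rewrite exprS GGE /rho; field; exact: lt0r_neq0 (powR_gt0 _ (ltr0n _ 2)).
rewrite er -subr_ge0.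
set P := Psi k i; set P1 := Psi k.+1 (2 * i); set P2 := Psi k.+1 (2 * i + 1).
set W := ww k; set b := bb k i; set rn := rho ^+ n.
have -> : W * b + cc * (W / GG) * (P1 - rn) + cc * (W / GG) * (P2 - rn) -
   cc * W * (P - rn * 2 / GG) = W * (b + cc / GG * (P1 + P2)) - W * (cc * P).
  by field.
by rewrite subr_ge0.
Qed.


Lemma bb_ge0 k i : 0 <= bb k i.
Proof. by rewrite bbE; case: ifP. Qed.

Lemma DF_ge (a b : \bar R) (alpha : int) Ln N :
  (a < ((alpha%:~R : R))%:E)%E -> ((((alpha + Ln%:Z)%:~R : R))%:E < b)%E ->
  ((\sum_(m < Ln) TT 0 (alpha + m%:Z) N)%:E <= DF gamma p lambda delta v a b)%E.
Proof.
move=> ha hb.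
have -> : \sum_(m < Ln) TT 0 (alpha + m%:Z) N =
    \sum_(j < N.+1) ww j * \sum_(t < Ln * 2 ^ j) bb j (alpha * (2 ^ j)%N%:Z + t%:Z).
  rewrite /TT exchange_big /=; apply: eq_bigr => j _.
  rewrite -mulr_sumr (sum_blocks (fun t => bb j (alpha * (2 ^ j)%N%:Z + t%:Z))) add0n; congr (_ * _).
  apply: eq_bigr => m _; apply: eq_bigr => r _; congr (bb _ _).
  by rewrite !PoszD PoszM; ring.
apply: le_trans (nneseries_lim_ge N.+1 _); last first.
  move=> k _ _; apply: mule_ge0; first by rewrite lee_fin ltW // ww_gt0.
  by apply: esum_ge0 => i _; rewrite lee_fin bb_ge0.
rewrite big_mkord -sumEFin; apply: lee_sum => j _.
rewrite EFinM; apply: lee_wpmul2l; first by rewrite lee_fin ltW // ww_gt0.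
apply: (@esum_lb (Dk j a b) (bb j) (alpha * (2 ^ j)%N%:Z) (Ln * 2 ^ j)) => [i|t ht]; first exact: bb_ge0.
exact: (@Dk_mem a b alpha Ln j t ha hb ht).
Qed.


Lemma tele (i0 : int) n :
  `|v ((i0 + n%:Z)%:~R) - v (i0%:~R)| <= \sum_(m < n) dd 0 (i0 + m%:Z).
Proof.
elim: n => [|n IH]; first by rewrite addr0 subrr normr0 big_ord0.
rewrite big_ord_recr /=; apply: le_trans (ler_distD (v ((i0 + n%:Z)%:~R)) _ _) _.
rewrite addrC lerD // /dd expr0 !divr1 -addrA.
by rewrite (_ : (n%:Z + 1) = n.+1%:Z) // -addn1 PoszD.
Qed.

Lemma exists_N (e K : R) : 0 < e -> 0 <= K -> exists N : nat, K * rho ^+ N <= e.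
Proof.
move=> e0 K0.
set h := (2:R) `^ gamma - 1.
have h0 : 0 < h by rewrite subr_gt0 two_pow_gt1.
have K0' : 0 <= K / (e * h) by rewrite divr_ge0 // ltW // mulr_gt0.
exists (Num.bound (K / (e * h))).
set N := Num.bound _.
have hN := archi_boundP K0'.
have B := @bern h N (ltW h0).
have e1 : 1 + h = 2 `^ gamma by rewrite /h addrC subrK.
rewrite e1 in B.
have pN : 0 < (2:R) `^ gamma ^+ N by rewrite exprn_gt0 // powR_gt0.
rewrite /rho exprVn ler_pdivrMr //.
apply: le_trans (_ : e * (1 + N%:R * h) <= _); last by rewrite ler_pM2l.
rewrite mulrDr mulr1 ler_wpDl ?ltW //.
rewrite ltr_pdivrMr ?mulr_gt0 // in hN.
by rewrite mulrCA.
Qed.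


Lemma main_bound (A B : R) (a b : \bar R) (alpha : int) Ln :
  (forall x : R, dyadic x -> (a < x%:E)%E -> (x%:E < b)%E -> A <= v x <= B) ->
  (a < ((alpha%:~R : R))%:E)%E -> ((((alpha + Ln.+1%:Z)%:~R : R))%:E < b)%E ->
  v alpha%:~R = A -> v (alpha + Ln.+1%:Z)%:~R = B ->
  B - A <= ss 0 ->
  ((cc * (Ln.+1%:R * ((B - A) / ss 0 / Ln.+1%:R) `^ p))%:E
     <= DF gamma p lambda delta v a b)%E.
Proof.
move=> hv ha hb vA vB hM.
set L := Ln.+1.
have s0 := ss_gt0 0.
have c0 := cc_gt0.
have vint (i : int) : alpha <= i <= alpha + L%:Z -> A <= v i%:~R <= B.
  move=> /andP[h1 h2]; apply: hv.
  - by exists i, 0%N; rewrite expr0 divr1.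
  - by apply: lt_le_trans ha _; rewrite lee_fin ler_int.
  - by apply: le_lt_trans _ hb; rewrite lee_fin ler_int.
have ddM (m : nat) : (m < L)%N -> dd 0 (alpha + m%:Z) <= B - A.
  move=> mL; rewrite /dd expr0 !divr1.
  have /andP[a1 b1] : A <= v (alpha + m%:Z + 1)%:~R <= B.
    apply: vint; apply/andP; split; first by rewrite -addrA lerDl.
    by rewrite -addrA lerD2l -[1]/(1%:Z) -PoszD lez_nat addn1.
  have /andP[a2 b2] : A <= v (alpha + m%:Z)%:~R <= B.
    apply: vint; apply/andP; split; first by rewrite lerDl.
    by rewrite lerD2l lez_nat ltnW.
  rewrite ler_norml opprB; apply/andP; split; exact: lerB.
set x := fun m : nat => dd 0 (alpha + m%:Z) / ss 0.
have x0 m : 0 <= x m by rewrite divr_ge0 ?/dd ?normr_ge0 // ltW.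
have Psix (m : 'I_L) : Psi 0 (alpha + m%:Z) = x m `^ p.
  rewrite Psi_small // -leNgt; exact: le_trans (ddM _ (ltn_ord m)) hM.
apply/lee_addgt0Pr => e e0.
have [N hN] := @exists_N e (cc * L%:R) e0 (mulr_ge0 (ltW c0) (ler0n _ _)).
apply: le_trans (leeD (@DF_ge a b alpha L N ha hb) (lexx e%:E)).
rewrite -EFinD lee_fin.
apply: le_trans (_ : cc * (\sum_(m < L) Psi 0 (alpha + m%:Z)) - cc * L%:R * rho ^+ N + e <= _); last first.
  rewrite lerD2r; apply: le_trans (_ : \sum_(m < L) cc * ww 0 * (Psi 0 (alpha + m%:Z) - rho ^+ N) <= _); last first.
    by apply: ler_sum => m _; apply: TT_bound.
  rewrite ww0 mulr1 -mulr_sumr sumrB sumr_const card_ord mulrBr -mulr_natl mulrA.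
  by have -> : cc * (rho ^+ N *+ L) = cc * L%:R * 1 * rho ^+ N by rewrite -mulr_natr; ring.
apply: (@le_trans _ _ (cc * \sum_(m < L) Psi 0 (alpha + m%:Z))); last first.
  by rewrite -addrA lerDl addrC subr_ge0.
rewrite ler_pM2l //.
rewrite (eq_bigr _ (fun m _ => Psix m)).
apply: le_trans (power_mean p x Ln p1 x0).
rewrite ler_wpM2l //.
have hS : 0 <= \sum_(m < L) x m by apply: sumr_ge0 => m _.
have hMs : 0 <= B - A by have := vint alpha; rewrite lexx /= lerDl => /(_ isT) /andP[]; rewrite vA subr_ge0.
apply: (ge0_ler_powR (ltW p0)).
- by rewrite nnegrE !divr_ge0 // ltW.
- by rewrite nnegrE divr_ge0.
apply: ler_wpM2r; first by rewrite invr_ge0 ler0n.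
rewrite /x -mulr_suml; apply: ler_wpM2r; first by rewrite invr_ge0 ltW.
rewrite -vA -vB; apply: le_trans (tele alpha L); exact: ler_norm.
Qed.


End Main.
End S.

Lemma powR_div (R : realType) (x y r : R) : 0 <= x -> 0 <= y -> (x / y) `^ r = x `^ r / y `^ r.
Proof. by move=> x0 y0; rewrite powRM ?invr_ge0 // powRV. Qed.


Theorem proposition2p2 (R : realType) (gamma p A B : R) (a b : \bar R)
  (v : R -> R) (alpha beta : int) :
  0 < gamma -> 1 <= p -> A <= B ->
  (forall x : R, dyadic x -> (a < x%:E)%E -> (x%:E < b)%E -> A <= v x <= B) ->
  (a < (alpha%:~R : R)%:E)%E -> alpha < beta -> ((beta%:~R : R)%:E < b)%E ->
  v alpha%:~R = A -> v beta%:~R = B ->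
  forall delta lambda : R, 1 / 2 <= delta <= 1 ->
  (2 : R) `^ (1 + gamma / p) * (B - A) <= lambda ->
  ((((2 : R) `^ (gamma + 1) - 1)^-1 * (lambda `^ p * delta `^ (p + gamma))^-1 *
     ((B - A) `^ p / (beta%:~R - alpha%:~R) `^ (p - 1)))%:E
   <= DF gamma p lambda delta v a b)%E.
Proof.
move=> g0 p1 AB hv ha ab hb vA vB delta lambda /andP[d1 d2] hl.
have p0 : 0 < p by exact: lt_le_trans ltr01 p1.
have dl0 : 0 < delta by apply: lt_le_trans d1; rewrite divr_gt0.
have [eAB|nAB] := eqVneq A B.
  rewrite eAB subrr powR0 ?(gt_eqF p0) // mul0r mulr0.
  apply: nneseries_ge0 => k _ _; apply: mule_ge0.
    by rewrite lee_fin invr_ge0 powR_ge0.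
  by apply: esum_ge0 => i _; rewrite lee_fin /psi; case: ifP.
have hM : 0 < B - A by rewrite subr_gt0 lt_neqAle nAB AB.
have l0 : 0 < lambda by apply: lt_le_trans hl; rewrite mulr_gt0 // powR_gt0.
have [Ln eb] : exists Ln : nat, beta = alpha + Ln.+1%:Z.
  exists (`|beta - alpha|%N.-1); rewrite prednK; last by rewrite absz_gt0 subr_eq0 gt_eqF.
  by rewrite gez0_abs ?subr_ge0 ?(ltW ab) // addrCA subrr addr0.
subst beta.
have q0 : 0 <= qq R gamma p by rewrite /qq addr_ge0 // divr_ge0 // ltW.
have hss : B - A <= ss R gamma p lambda delta 0.
  rewrite /ss expr0 divr1.
  apply: le_trans (_ : (2 : R) `^ qq R gamma p * (B - A) * (1/2) `^ qq R gamma p <= _).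
    rewrite mulrAC -powRM ?divr_ge0 // (_ : 2 * (1 / 2) = 1 :> R); last by field.
    by rewrite powR1 mul1r.
  apply: ler_pM.
  - by rewrite mulr_ge0 ?powR_ge0 // ltW.
  - exact: powR_ge0.
  - exact: hl.
  - apply: (ge0_ler_powR q0) => //; rewrite nnegrE ?divr_ge0 //.
    exact: ltW.
have H := @main_bound R gamma p lambda delta v g0 p1 l0 dl0 A B a b alpha Ln hv ha hb vA vB hss.
apply: le_trans H; rewrite lee_fin le_eqVlt; apply/orP; left; apply/eqP.
rewrite /cc /GG /ss expr0 divr1.
have eL : ((alpha + Ln.+1%:Z)%:~R - alpha%:~R : R) = Ln.+1%:R.
  by rewrite intrD addrAC subrr add0r -pmulrn.
rewrite eL.
have L0 : (0:R) < Ln.+1%:R by rewrite ltr0n.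
have dq0 : 0 <= delta `^ qq R gamma p by exact: powR_ge0.
have hMA := ltW hM; have hl0 := ltW l0; have hL0 := ltW L0.
rewrite (@powR_div R _ _ p (divr_ge0 hMA (mulr_ge0 hl0 dq0)) hL0).
rewrite (@powR_div R _ _ p hMA (mulr_ge0 hl0 dq0)) (@powRM R _ _ p hl0 dq0) -powRrM.
have -> : qq R gamma p * p = p + gamma by rewrite /qq mulrDl mul1r divfK ?gt_eqF // addrC.
rewrite -(@mulr_powRB1 R _ p hL0 p0).
have n1 : (2:R) `^ (gamma + 1) - 1 != 0.
  by rewrite subr_eq0 gt_eqF // two_pow_gt1 // addr_gt0.
have n2 : lambda `^ p != 0 by rewrite gt_eqF // powR_gt0.
have n3 : delta `^ (p + gamma) != 0 by rewrite gt_eqF // powR_gt0.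
have n4 : (Ln.+1%:R : R) `^ (p - 1) != 0 by rewrite gt_eqF // powR_gt0.
have n5 : (Ln.+1%:R : R) != 0 by rewrite gt_eqF.
field.
have n6 : (1 + Ln%:R : R) != 0 by rewrite gt_eqF // ltr_pwDl // ler0n.
by rewrite n1 n2 n3 n4 n6.
Qed.
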